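(* For $p\in\mathbb C\langle{\bf X},{\bf Y}\rangle$ define $\|p\|_u=\sup\|p({\bf T}_1,{\bf T}_2)\|$, the supremum taken over all Hilbert spaces $\mathcal H$ and all $({\bf T}_1,{\bf T}_2)\in{\bf P}^-_{\bf n}(\mathcal H)$. Then $\|\cdot\|_u$ is an algebra norm on $\mathbb C\langle{\bf X},{\bf Y}\rangle$; in particular $\|p\|_u=0$ implies $p=0$.
   Context: ${\bf P}^-_{\bf n}(\mathcal H)$, ${\bf n}=(n_1,n_2)$, is the set of pairs $({\bf X},{\bf Y})$ of row contractions ${\bf X}=[X_1,\dots,X_{n_1}]$, ${\bf Y}=[Y_1,\dots,Y_{n_2}]$ in $B(\mathcal H)$ (i.e. $\sum X_iX_i^*\le I$, $\sum Y_jY_j^*\le I$) with $X_iY_j=Y_jX_i$ for all $i,j$. $\mathbb C\langle{\bf X},{\bf Y}\rangle$ is the algebra of complex polynomials in indeterminates $X_1,\dots,X_{n_1},Y_1,\dots,Y_{n_2}$ where the $X$'s are mutually noncommuting, the $Y$'s are mutually noncommuting, and $X_iY_j=Y_jX_i$; $p({\bf T}_1,{\bf T}_2)$ denotes evaluation. *)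

(* Defs.v *)
From Stdlib Require Import List.
From Stdlib Require Vectors.Fin.
From Stdlib Require Import Reals.
Open Scope R_scope.

Record C : Type := mkC { re : R; im : R }.
Definition C0 : C := mkC 0 0.
Definition C1 : C := mkC 1 0.
Definition Cadd (a b : C) : C := mkC (re a + re b) (im a + im b).
Definition Cmul (a b : C) : C :=
  mkC (re a * re b - im a * im b) (re a * im b + im a * re b).
Definition Cconj (a : C) : C := mkC (re a) (- im a).
Definition Cmod (a : C) : R := sqrt (re a * re a + im a * im a).

Record Hilbert : Type := {
  hcar :> Type;
  hzero : hcar;
  hadd : hcar -> hcar -> hcar;
  hopp : hcar -> hcar;
  hscal : C -> hcar -> hcar;
  hinner : hcar -> hcar -> C;
  hadd_assoc : forall x y z, hadd x (hadd y z) = hadd (hadd x y) z;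
  hadd_comm : forall x y, hadd x y = hadd y x;
  hadd_0 : forall x, hadd hzero x = x;
  hadd_opp : forall x, hadd x (hopp x) = hzero;
  hscal_1 : forall x, hscal C1 x = x;
  hscal_assoc : forall a b x, hscal a (hscal b x) = hscal (Cmul a b) x;
  hscal_distr_v : forall a x y, hscal a (hadd x y) = hadd (hscal a x) (hscal a y);
  hscal_distr_s : forall a b x, hscal (Cadd a b) x = hadd (hscal a x) (hscal b x);
  hinner_add_l : forall x y z, hinner (hadd x y) z = Cadd (hinner x z) (hinner y z);
  hinner_scal_l : forall a x y, hinner (hscal a x) y = Cmul a (hinner x y);
  hinner_conj : forall x y, hinner y x = Cconj (hinner x y);
  hinner_pos : forall x, 0 <= re (hinner x x);
  hinner_def : forall x, hinner x x = C0 -> x = hzero;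
  hcomplete : forall u : nat -> hcar,
    (forall eps, 0 < eps -> exists N, forall m n, (N <= m)%nat -> (N <= n)%nat ->
       sqrt (re (hinner (hadd (u m) (hopp (u n))) (hadd (u m) (hopp (u n))))) < eps) ->
    exists l, forall eps, 0 < eps -> exists N, forall n, (N <= n)%nat ->
       sqrt (re (hinner (hadd (u n) (hopp l)) (hadd (u n) (hopp l)))) < eps
}.

Arguments hzero {h}. Arguments hadd {h}. Arguments hopp {h}.
Arguments hscal {h}. Arguments hinner {h}.

Definition hnorm {H : Hilbert} (x : H) : R := sqrt (re (hinner x x)).

Definition op (H : Hilbert) := H -> H.

Definition bounded_linear {H : Hilbert} (T : op H) : Prop :=
  (forall x y, T (hadd x y) = hadd (T x) (T y)) /\
  (forall a x, T (hscal a x) = hscal a (T x)) /\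
  (exists M, forall x, hnorm (T x) <= M * hnorm x).

Definition is_adjoint {H : Hilbert} (T A : op H) : Prop :=
  forall x y, hinner (T x) y = hinner x (A y).

Definition op_le {H : Hilbert} (S T : op H) : Prop :=
  forall h, im (hinner (hadd (T h) (hopp (S h))) h) = 0 /\
            0 <= re (hinner (hadd (T h) (hopp (S h))) h).

Fixpoint fin_vsum {H : Hilbert} (n : nat) : (Fin.t n -> H) -> H :=
  match n with
  | O => fun _ => hzero
  | S m => fun f => hadd (f Fin.F1) (fin_vsum m (fun i => f (Fin.FS i)))
  end.

Definition row_contraction {H : Hilbert} (n : nat) (X : Fin.t n -> op H) : Prop :=
  (forall i, bounded_linear (X i)) /\
  exists A : Fin.t n -> op H,
    (forall i, is_adjoint (X i) (A i)) /\
    op_le (fun h => fin_vsum n (fun i => X i (A i h))) (fun h => h).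

Definition in_Pn {H : Hilbert} (n1 n2 : nat) (X : Fin.t n1 -> op H)
  (Y : Fin.t n2 -> op H) : Prop :=
  row_contraction n1 X /\ row_contraction n2 Y /\
  (forall i j h, X i (Y j h) = Y j (X i h)).

(* ---------- the algebra C<X,Y> ----------
   Since the X's commute with the Y's, every monomial is X_alpha Y_beta for a
   unique pair of words (alpha, beta); a polynomial is represented by a finite
   list of terms (alpha, beta, c), and two representations denote the same
   polynomial iff they have the same coefficient function [coeff]. *)
Definition word (n : nat) := list (Fin.t n).
Definition term (n1 n2 : nat) := (word n1 * word n2 * C)%type.
Definition ncpoly (n1 n2 : nat) := list (term n1 n2).

Definition word_eq_dec {n : nat} : forall a b : word n, {a = b} + {a <> b} :=
  list_eq_dec (@Fin.eq_dec n).

Definition coeff {n1 n2 : nat} (p : ncpoly n1 n2) (w : word n1 * word n2) : C :=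
  fold_right (fun t acc =>
    let '(a, b, c) := t in
    if word_eq_dec a (fst w) then
      if word_eq_dec b (snd w) then Cadd c acc else acc
    else acc) C0 p.

Definition padd {n1 n2 : nat} (p q : ncpoly n1 n2) : ncpoly n1 n2 := p ++ q.
Definition pscale {n1 n2 : nat} (a : C) (p : ncpoly n1 n2) : ncpoly n1 n2 :=
  map (fun t => let '(x, y, c) := t in (x, y, Cmul a c)) p.
Definition pmul {n1 n2 : nat} (p q : ncpoly n1 n2) : ncpoly n1 n2 :=
  flat_map (fun t => let '(x, y, c) := t in
    map (fun t' => let '(x', y', c') := t' in (x ++ x', y ++ y', Cmul c c')) q) p.

Definition eval_word {H : Hilbert} {n : nat} (T : Fin.t n -> op H) (w : word n)
  (h : H) : H := fold_right (fun i acc => T i acc) h w.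

Definition peval {H : Hilbert} {n1 n2 : nat} (p : ncpoly n1 n2)
  (T1 : Fin.t n1 -> op H) (T2 : Fin.t n2 -> op H) : op H :=
  fun h => fold_right (fun t acc =>
    let '(x, y, c) := t in
    hadd (hscal c (eval_word T1 x (eval_word T2 y h))) acc) hzero p.

Definition is_opnorm {H : Hilbert} (T : op H) (r : R) : Prop :=
  is_lub (fun y => exists h : H, hnorm h <= 1 /\ y = hnorm (T h)) r.

Definition unorm_set {n1 n2 : nat} (p : ncpoly n1 n2) : R -> Prop :=
  fun r => exists (H : Hilbert) (T1 : Fin.t n1 -> op H) (T2 : Fin.t n2 -> op H),
    in_Pn n1 n2 T1 T2 /\ is_opnorm (peval p T1 T2) r.

(* Main.v *)
Require Import Defs.
From Stdlib Require Import Reals.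
Open Scope R_scope.
From Stdlib Require Import Lra List Lia.
From Stdlib Require Vectors.Fin.
From Stdlib Require Import Classical FunctionalExtensionality.
Import Defs.

Lemma Ceq : forall a b c d, a = c -> b = d -> mkC a b = mkC c d.
Proof. intros; subst; reflexivity. Qed.

Ltac Cdes := repeat match goal with c : C |- _ => destruct c end.
Ltac Csolve := unfold Cadd, Cmul, Cconj, C0, C1 in *; Cdes; simpl in *; apply Ceq; ring.

Section HilbertBasics.
Variable H : Hilbert.
Implicit Types x y z : H.

Lemma hadd_0r x : hadd x hzero = x.
Proof. rewrite hadd_comm; apply hadd_0. Qed.

Lemma self_add_zero (a : H) : a = hadd a a -> a = hzero.
Proof.
  intro E. transitivity (hadd (hadd a a) (hopp a)).
  - rewrite <- hadd_assoc, hadd_opp, hadd_0r. reflexivity.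
  - rewrite <- E. apply hadd_opp.
Qed.

Lemma hscal_C0 x : hscal C0 x = hzero.
Proof.
  apply self_add_zero. rewrite <- hscal_distr_s. f_equal. Csolve.
Qed.

Lemma hscal_zero a : hscal a (@hzero H) = hzero.
Proof.
  apply self_add_zero. rewrite <- hscal_distr_v, hadd_0. reflexivity.
Qed.

Definition Cm1 : C := mkC (-1) 0.

Lemma hopp_scal x : hopp x = hscal Cm1 x.
Proof.
  assert (E : hadd x (hscal Cm1 x) = hzero).
  { rewrite <- (hscal_1 _ x) at 1. rewrite <- hscal_distr_s.
    rewrite <- (hscal_C0 x). f_equal. unfold Cm1; Csolve. }
  rewrite <- (hadd_0r (hopp x)). rewrite <- E.
  rewrite hadd_assoc. rewrite (hadd_comm _ (hopp x) x), hadd_opp, hadd_0. reflexivity.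
Qed.

Lemma inner_0l y : hinner (@hzero H) y = C0.
Proof.
  rewrite <- (hscal_C0 hzero), hinner_scal_l. Csolve.
Qed.

Lemma inner_0r y : hinner y (@hzero H) = C0.
Proof. rewrite hinner_conj, inner_0l. Csolve. Qed.

Lemma inner_add_r x y z : hinner x (hadd y z) = Cadd (hinner x y) (hinner x z).
Proof.
  rewrite (hinner_conj _ (hadd y z) x), hinner_add_l.
  rewrite (hinner_conj _ y x), (hinner_conj _ z x). Csolve.
Qed.

Lemma inner_scal_r a x y : hinner x (hscal a y) = Cmul (Cconj a) (hinner x y).
Proof.
  rewrite (hinner_conj _ (hscal a y) x), hinner_scal_l, (hinner_conj _ y x). Csolve.
Qed.

Lemma inner_opp_l x y : hinner (hopp x) y = Cmul Cm1 (hinner x y).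
Proof. rewrite hopp_scal, hinner_scal_l. reflexivity. Qed.

Lemma im_inner_self x : im (hinner x x) = 0.
Proof.
  pose proof (hinner_conj _ x x) as E. destruct (hinner x x) as [a b].
  unfold Cconj in E. simpl in *. injection E. lra.
Qed.

Lemma hnorm_nonneg x : 0 <= hnorm x.
Proof. unfold hnorm. apply sqrt_pos. Qed.

Lemma hnorm_sq x : hnorm x * hnorm x = re (hinner x x).
Proof. unfold hnorm. apply sqrt_sqrt, hinner_pos. Qed.

Lemma hnorm_zero_eq x : hnorm x = 0 -> x = hzero.
Proof.
  intro E. apply hinner_def. pose proof (hnorm_sq x) as S. rewrite E in S.
  pose proof (im_inner_self x). destruct (hinner x x) as [a b]; simpl in *.
  unfold C0. f_equal; lra.
Qed.

Lemma hnorm_hzero : hnorm (@hzero H) = 0.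
Proof. unfold hnorm. rewrite inner_0l. simpl. apply sqrt_0. Qed.

Lemma expand_real t x y :
  re (hinner (hadd x (hscal (mkC t 0) y)) (hadd x (hscal (mkC t 0) y))) =
  re (hinner x x) + 2 * t * re (hinner x y) + t * t * re (hinner y y).
Proof.
  rewrite hinner_add_l, !inner_add_r, ?hinner_scal_l, ?inner_scal_r, ?hinner_scal_l.
  rewrite (hinner_conj _ x y).
  destruct (hinner x x), (hinner x y), (hinner y y). simpl. ring.
Qed.

Lemma re_CS x y : re (hinner x y) <= hnorm x * hnorm y.
Proof.
  set (A := re (hinner x x)). set (B := re (hinner y y)). set (r := re (hinner x y)).
  pose proof (hnorm_sq x) as Sx. pose proof (hnorm_sq y) as Sy.
  pose proof (hnorm_nonneg x). pose proof (hnorm_nonneg y).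
  destruct (Req_dec B 0) as [HB|HB].
  - assert (y = hzero).
    { apply hnorm_zero_eq. fold B in Sy. rewrite HB in Sy. nra. }
    subst y. unfold r. rewrite inner_0r. simpl. nra.
  - assert (Bpos : 0 < B) by (pose proof (hinner_pos _ y); fold B in H2; lra).
    pose proof (hinner_pos _ (hadd x (hscal (mkC (-r/B) 0) y))) as P.
    rewrite expand_real in P. fold A B r in P.
    set (t := -r/B) in P. assert (tB : t * B = - r) by (unfold t; field; lra).
    assert (P2 : 0 <= A + t * r).
    { replace (t * t * B) with (t * (t * B)) in P by ring. rewrite tB in P. lra. }
    assert (P3 : 0 <= B * (A + t * r)) by (apply Rmult_le_pos; lra).
    assert (r * r <= A * B).
    { replace (B * (A + t * r)) with (A * B + (t * B) * r) in P3 by ring.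
      rewrite tB in P3. lra. }
    fold A in Sx. fold B in Sy.
    destruct (Rle_dec r (hnorm x * hnorm y)) as [|Hn]; auto.
    exfalso. apply Rnot_le_lt in Hn.
    assert (0 <= hnorm x * hnorm y) by (apply Rmult_le_pos; auto).
    assert ((hnorm x * hnorm y) * (hnorm x * hnorm y) < r * r) by nra.
    nra.
Qed.

Lemma hnorm_triangle x y : hnorm (hadd x y) <= hnorm x + hnorm y.
Proof.
  pose proof (hnorm_sq (hadd x y)) as S.
  rewrite hinner_add_l, !inner_add_r in S. simpl in S.
  pose proof (re_CS x y). pose proof (re_CS y x).
  rewrite <- (hnorm_sq x), <- (hnorm_sq y) in S.
  pose proof (hnorm_nonneg x). pose proof (hnorm_nonneg y). pose proof (hnorm_nonneg (hadd x y)).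
  nra.
Qed.

Lemma hnorm_scal a x : hnorm (hscal a x) = Cmod a * hnorm x.
Proof.
  unfold hnorm, Cmod. rewrite hinner_scal_l, inner_scal_r.
  pose proof (im_inner_self x). pose proof (hinner_pos _ x).
  destruct (hinner x x) as [p q]. simpl in *. subst q.
  rewrite <- sqrt_mult. f_equal. ring. nra. auto.
Qed.

End HilbertBasics.

Lemma Cmod_nonneg a : 0 <= Cmod a.
Proof. unfold Cmod. apply sqrt_pos. Qed.

Lemma Cmod_real a : 0 <= a -> Cmod (mkC a 0) = a.
Proof. intro. unfold Cmod. simpl. replace (a*a+0*0) with (a*a) by ring. apply sqrt_square; auto. Qed.

Fixpoint fin_rsum (n : nat) : (Fin.t n -> R) -> R :=
  match n with
  | O => fun _ => 0
  | S m => fun f => f Fin.F1 + fin_rsum m (fun i => f (Fin.FS i))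
  end.

Lemma fin_rsum_nonneg n f : (forall j, 0 <= f j) -> 0 <= fin_rsum n f.
Proof.
  revert f; induction n; intros f Hf; simpl. lra.
  pose proof (Hf Fin.F1). pose proof (IHn (fun i => f (Fin.FS i)) (fun j => Hf _)). lra.
Qed.

Lemma fin_rsum_ge n (i : Fin.t n) f : (forall j, 0 <= f j) -> f i <= fin_rsum n f.
Proof.
  revert f. induction i; intros f Hf; simpl.
  - pose proof (fin_rsum_nonneg n (fun i => f (Fin.FS i)) (fun j => Hf _)). lra.
  - pose proof (IHi (fun i => f (Fin.FS i)) (fun j => Hf _)). pose proof (Hf Fin.F1). simpl in *. lra.
Qed.

Section Ops.
Variable H : Hilbert.

Definition homog (T : op H) := forall a x, T (hscal a x) = hscal a (T x).
Definition additive (T : op H) := forall x y, T (hadd x y) = hadd (T x) (T y).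

Lemma homog_zero T : homog T -> T hzero = hzero.
Proof. intro h. rewrite <- (hscal_C0 _ hzero), h, !hscal_C0. reflexivity. Qed.

Lemma opnorm_nonneg (T : op H) r : is_opnorm T r -> 0 <= r.
Proof.
  intros [U _]. pose proof (hnorm_nonneg _ (T hzero)).
  assert (hnorm (T hzero) <= r); [|lra].
  apply U. exists hzero. split; auto. rewrite hnorm_hzero. lra.
Qed.

Lemma opnorm_le1 (T : op H) r h : is_opnorm T r -> hnorm h <= 1 -> hnorm (T h) <= r.
Proof. intros [U _] Hh. apply U. exists h; auto. Qed.

Lemma opnorm_bound (T : op H) r : homog T -> is_opnorm T r -> forall h, hnorm (T h) <= r * hnorm h.
Proof.
  intros Ho Hr h. pose proof (opnorm_nonneg _ _ Hr).
  destruct (Req_dec (hnorm h) 0) as [E|E].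
  - apply hnorm_zero_eq in E. subst h. rewrite homog_zero, hnorm_hzero; auto. lra.
  - pose proof (hnorm_nonneg _ h). set (n := hnorm h) in *.
    assert (np : 0 < n) by lra.
    set (h' := hscal (mkC (/n) 0) h).
    assert (N1 : hnorm h' = 1).
    { unfold h'. rewrite hnorm_scal, Cmod_real. fold n. field. lra.
      left. apply Rinv_0_lt_compat. auto. }
    pose proof (opnorm_le1 _ _ _ Hr (Req_le _ _ N1)) as L.
    unfold h' in L. rewrite Ho, hnorm_scal, Cmod_real in L.
    2: left; apply Rinv_0_lt_compat; auto.
    apply (Rmult_le_compat_l n) in L; [|lra].
    rewrite <- Rmult_assoc, Rinv_r in L; lra.
Qed.

Lemma opnorm_least (T : op H) r M : is_opnorm T r -> (forall h, hnorm (T h) <= M * hnorm h) -> 0 <= M -> r <= M.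
Proof.
  intros [_ L] HM M0. apply L. intros y [h [Hh ->]].
  pose proof (HM h). pose proof (Rmult_le_compat_l M _ _ M0 Hh). lra.
Qed.

Lemma opnorm_exists (T : op H) M : (forall h, hnorm (T h) <= M * hnorm h) -> 0 <= M -> exists r, is_opnorm T r.
Proof.
  intros HM M0.
  destruct (completeness (fun y => exists h : H, hnorm h <= 1 /\ y = hnorm (T h))) as [r Hr].
  - exists M. intros y [h [Hh ->]]. pose proof (HM h). pose proof (Rmult_le_compat_l M _ _ M0 Hh). lra.
  - exists (hnorm (T hzero)). exists hzero. split; auto. rewrite hnorm_hzero. lra.
  - exists r. exact Hr.
Qed.

Lemma re_inner_vsum n (f : Fin.t n -> H) (h : H) :
  re (hinner (fin_vsum n f) h) = fin_rsum n (fun i => re (hinner (f i) h)).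
Proof.
  revert f; induction n; intro f; simpl.
  - rewrite inner_0l. reflexivity.
  - rewrite hinner_add_l. simpl. rewrite IHn. reflexivity.
Qed.

Lemma adj_contr n (X : Fin.t n -> op H) :
  (exists A : Fin.t n -> op H,
    (forall i, is_adjoint (X i) (A i)) /\
    op_le (fun h => fin_vsum n (fun i => X i (A i h))) (fun h => h)) ->
  forall i h, hnorm (X i h) <= hnorm h.
Proof.
  intros [A [Hadj Hle]] i.
  assert (K : forall h, re (hinner (A i h) (A i h)) <= re (hinner h h)).
  { intro h. destruct (Hle h) as [_ P].
    rewrite hinner_add_l, inner_opp_l in P. simpl in P.
    rewrite re_inner_vsum in P.
    assert (E : (fun j => re (hinner (X j (A j h)) h)) = (fun j => re (hinner (A j h) (A j h)))).
    { apply functional_extensionality; intro j. rewrite Hadj. reflexivity. }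
    rewrite E in P.
    pose proof (fin_rsum_ge n i (fun j => re (hinner (A j h) (A j h))) (fun j => hinner_pos _ _)).
    simpl in *. unfold Cm1 in P. destruct (hinner (fin_vsum n (fun i0 => X i0 (A i0 h))) h). simpl in *.
    lra. }
  intro h.
  assert (E2 : re (hinner (X i h) (X i h)) = re (hinner h (A i (X i h)))) by (rewrite Hadj; auto).
  pose proof (re_CS _ h (A i (X i h))).
  pose proof (K (X i h)).
  rewrite <- !hnorm_sq in *.
  pose proof (hnorm_nonneg _ h). pose proof (hnorm_nonneg _ (X i h)). pose proof (hnorm_nonneg _ (A i (X i h))).
  assert (hnorm (A i (X i h)) <= hnorm (X i h)) by nra.
  nra.
Qed.

Lemma rowc_contr n (X : Fin.t n -> op H) : row_contraction n X -> forall i h, hnorm (X i h) <= hnorm h.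
Proof. intros [_ R]. apply adj_contr; auto. Qed.

End Ops.

Section Poly.
Variable H : Hilbert.
Variables n1 n2 : nat.
Variable T1 : Fin.t n1 -> op H.
Variable T2 : Fin.t n2 -> op H.

Definition lin {n} (T : Fin.t n -> op H) := forall i, additive H (T i) /\ homog H (T i).

Lemma hadd_swap4 (a b c d : H) : hadd (hadd a b) (hadd c d) = hadd (hadd a c) (hadd b d).
Proof.
  rewrite <- !hadd_assoc. f_equal. rewrite !hadd_assoc. f_equal. apply hadd_comm.
Qed.

Lemma ew_add {n} (T : Fin.t n -> op H) w : lin T -> additive H (eval_word T w).
Proof.
  intros L x y. induction w; simpl; auto. rewrite IHw. apply (L a).
Qed.

Lemma ew_homog {n} (T : Fin.t n -> op H) w : lin T -> homog H (eval_word T w).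
Proof.
  intros L c x. induction w; simpl; auto. rewrite IHw. apply (L a).
Qed.

Lemma ew_app {n} (T : Fin.t n -> op H) x y h :
  eval_word T (x ++ y) h = eval_word T x (eval_word T y h).
Proof. unfold eval_word. apply fold_right_app. Qed.

Lemma ew_contr {n} (T : Fin.t n -> op H) w h :
  (forall i h, hnorm (T i h) <= hnorm h) -> hnorm (eval_word T w h) <= hnorm h.
Proof.
  intro K. induction w; simpl. lra. eapply Rle_trans; [apply K|]. auto.
Qed.

Hypothesis L1 : lin T1.
Hypothesis L2 : lin T2.
Hypothesis Comm : forall i j h, T1 i (T2 j h) = T2 j (T1 i h).

Lemma ew_comm x y h : eval_word T1 x (eval_word T2 y h) = eval_word T2 y (eval_word T1 x h).
Proof.
  assert (A : forall i y h, T1 i (eval_word T2 y h) = eval_word T2 y (T1 i h)).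
  { intros i y0. induction y0; intro h0; simpl; auto. rewrite Comm, IHy0. reflexivity. }
  revert h. induction x; intro h; simpl; auto. rewrite IHx, A. reflexivity.
Qed.

Definition mon (x : word n1) (y : word n2) (h : H) := eval_word T1 x (eval_word T2 y h).

Lemma mon_add x y : additive H (mon x y).
Proof. intros u v. unfold mon. rewrite (ew_add T2 y L2), (ew_add T1 x L1). auto. Qed.

Lemma mon_homog x y : homog H (mon x y).
Proof. intros a u. unfold mon. rewrite (ew_homog T2 y L2), (ew_homog T1 x L1). auto. Qed.

Lemma peval_cons x y c p h :
  peval ((x, y, c) :: p) T1 T2 h = hadd (hscal c (mon x y h)) (peval p T1 T2 h).
Proof. reflexivity. Qed.

Lemma peval_app p q h :
  peval (p ++ q) T1 T2 h = hadd (peval p T1 T2 h) (peval q T1 T2 h).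
Proof.
  induction p as [|[[x y] c] p IH]; simpl.
  - rewrite hadd_0. reflexivity.
  - unfold peval in *. simpl. rewrite IH, hadd_assoc. reflexivity.
Qed.

Lemma peval_scale a p h :
  peval (pscale a p) T1 T2 h = hscal a (peval p T1 T2 h).
Proof.
  induction p as [|[[x y] c] p IH]; simpl.
  - unfold peval; simpl. rewrite hscal_zero. reflexivity.
  - unfold peval in *. simpl. rewrite IH, hscal_distr_v, hscal_assoc. reflexivity.
Qed.

Lemma peval_add p : additive H (peval p T1 T2).
Proof.
  intros u v. induction p as [|[[x y] c] p IH].
  - unfold peval; simpl. rewrite hadd_0. reflexivity.
  - rewrite !peval_cons, IH, mon_add, hscal_distr_v. apply hadd_swap4.
Qed.

Lemma peval_homog p : homog H (peval p T1 T2).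
Proof.
  intros a u. induction p as [|[[x y] c] p IH].
  - unfold peval; simpl. rewrite hscal_zero. reflexivity.
  - rewrite !peval_cons, IH, mon_homog, hscal_distr_v, !hscal_assoc.
    f_equal. f_equal. Csolve.
Qed.

Lemma peval_map x y c q h :
  peval (map (fun t' => let '(x', y', c') := t' in (x ++ x', y ++ y', Cmul c c')) q) T1 T2 h
  = hscal c (mon x y (peval q T1 T2 h)).
Proof.
  induction q as [|[[x' y'] c'] q IH].
  - unfold peval; simpl. fold (@peval H n1 n2 nil T1 T2 h).
    assert (E : mon x y hzero = hzero) by (apply homog_zero, mon_homog).
    change (fold_right _ hzero nil) with (@hzero H). rewrite E, hscal_zero. reflexivity.
  - simpl map. rewrite !peval_cons, IH, mon_add, mon_homog, hscal_distr_v, hscal_assoc.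
    f_equal. f_equal. unfold mon. rewrite !ew_app. f_equal.
    rewrite <- ew_comm. reflexivity.
Qed.

Lemma peval_mul p q h :
  peval (pmul p q) T1 T2 h = peval p T1 T2 (peval q T1 T2 h).
Proof.
  induction p as [|[[x y] c] p IH].
  - reflexivity.
  - unfold pmul. simpl flat_map. rewrite peval_app. fold (pmul p q).
    rewrite IH, peval_map, peval_cons. reflexivity.
Qed.

Definition psum (p : ncpoly n1 n2) : R :=
  fold_right (fun t acc => let '(_, _, c) := t in Cmod c + acc) 0 p.

Lemma psum_nonneg p : 0 <= psum p.
Proof.
  induction p as [|[[x y] c] p IH]; simpl. lra. pose proof (Cmod_nonneg c). lra.
Qed.

Lemma peval_bound p h :
  (forall i h, hnorm (T1 i h) <= hnorm h) -> (forall i h, hnorm (T2 i h) <= hnorm h) ->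
  hnorm (peval p T1 T2 h) <= psum p * hnorm h.
Proof.
  intros K1 K2. induction p as [|[[x y] c] p IH].
  - unfold peval; simpl. rewrite hnorm_hzero. lra.
  - rewrite peval_cons. simpl psum. eapply Rle_trans; [apply hnorm_triangle|].
    rewrite hnorm_scal.
    assert (hnorm (mon x y h) <= hnorm h).
    { unfold mon. eapply Rle_trans; apply ew_contr; auto. }
    pose proof (Cmod_nonneg c).
    pose proof (Rmult_le_compat_l _ _ _ H1 H0). lra.
Qed.

End Poly.

Section Group.
Variables n1 n2 : nat.

Definition wpair_dec (w w' : word n1 * word n2) : {w = w'} + {w <> w'}.
Proof.
  destruct w as [a b], w' as [a' b'].
  destruct (word_eq_dec a a'); [|right; congruence].
  destruct (word_eq_dec b b'); [|right; congruence]. left; congruence.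
Defined.

Definition mono_eq (w : word n1 * word n2) (t : term n1 n2) : bool :=
  let '(a, b, _) := t in
  if word_eq_dec a (fst w) then if word_eq_dec b (snd w) then true else false else false.

Lemma mono_eq_true w a b c : mono_eq w (a, b, c) = true <-> (a, b) = w.
Proof.
  destruct w as [a' b']. simpl.
  destruct (word_eq_dec a a'), (word_eq_dec b b'); split; intro; subst; try congruence.
Qed.

Lemma coeff_cons (t : term n1 n2) p w :
  coeff (t :: p) w = let '(_, _, c) := t in if mono_eq w t then Cadd c (coeff p w) else coeff p w.
Proof.
  destruct t as [[a b] c]. unfold coeff at 1. simpl. fold (coeff p w).
  destruct (word_eq_dec a (fst w)), (word_eq_dec b (snd w)); reflexivity.
Qed.

Lemma coeff_filter_same p w :
  coeff (filter (mono_eq w) p) w = coeff p w.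
Proof.
  induction p as [|[[a b] c] p IH]; [reflexivity|]. cbn [filter].
  destruct (mono_eq w (a, b, c)) eqn:E.
  - rewrite !coeff_cons, E, IH. reflexivity.
  - rewrite coeff_cons, E. auto.
Qed.

Lemma coeff_filter_other p w w' :
  coeff (filter (fun t => negb (mono_eq w t)) p) w' =
  if wpair_dec w' w then C0 else coeff p w'.
Proof.
  induction p as [|[[a b] c] p IH]; cbn [filter].
  - destruct (wpair_dec w' w); reflexivity.
  - destruct (mono_eq w (a, b, c)) eqn:E; cbn [negb].
    + rewrite IH. destruct (wpair_dec w' w); auto.
      rewrite coeff_cons. destruct (mono_eq w' (a,b,c)) eqn:E'; auto.
      apply mono_eq_true in E. apply mono_eq_true in E'. congruence.
    + rewrite !coeff_cons, IH. destruct (wpair_dec w' w).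
      * subst. rewrite E. reflexivity.
      * reflexivity.
Qed.

Lemma filter_len_le {A} (f : A -> bool) (l : list A) : (length (filter f l) <= length l)%nat.
Proof. induction l; simpl; auto. destruct (f a); simpl; lia. Qed.

Variable H : Hilbert.
Variable T1 : Fin.t n1 -> op H.
Variable T2 : Fin.t n2 -> op H.

Lemma peval_filter (P : term n1 n2 -> bool) p h :
  peval p T1 T2 h = hadd (peval (filter P p) T1 T2 h) (peval (filter (fun t => negb (P t)) p) T1 T2 h).
Proof.
  induction p as [|[[a b] c] p IH]; cbn [filter].
  - unfold peval; simpl. rewrite hadd_0. reflexivity.
  - destruct (P (a, b, c)); cbn [negb filter]; rewrite !peval_cons, IH.
    + apply hadd_assoc.
    + rewrite !hadd_assoc. f_equal. apply hadd_comm.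
Qed.

Lemma peval_allsame w p h :
  (forall t, In t p -> mono_eq w t = true) ->
  peval p T1 T2 h = hscal (coeff p w) (mon H n1 n2 T1 T2 (fst w) (snd w) h).
Proof.
  induction p as [|[[a b] c] p IH]; intro Hin.
  - unfold peval, coeff; simpl. rewrite hscal_C0. reflexivity.
  - rewrite peval_cons, coeff_cons.
    assert (E := Hin _ (or_introl eq_refl)). rewrite E.
    apply mono_eq_true in E. subst w. simpl.
    rewrite IH by (intros; apply Hin; right; auto). simpl.
    rewrite hscal_distr_s. reflexivity.
Qed.

Lemma zero_coeff_peval_aux len : forall p h, (length p <= len)%nat ->
  (forall w, coeff p w = C0) -> peval p T1 T2 h = hzero.
Proof.
  induction len; intros p h Hl Hc.
  - destruct p; simpl in Hl; [reflexivity|lia].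
  - destruct p as [|[[a b] c] p']; [reflexivity|].
    set (p := (a, b, c) :: p') in *. set (w := (a, b)).
    rewrite (peval_filter (mono_eq w)).
    rewrite (peval_allsame w).
    2: { intros t Ht. apply filter_In in Ht. tauto. }
    rewrite coeff_filter_same, Hc, hscal_C0, hadd_0.
    apply IHlen.
    + unfold p. cbn [filter]. assert (mono_eq w (a, b, c) = true) by (apply mono_eq_true; reflexivity).
      change (w, c) with (a, b, c). rewrite H0. cbn [negb length]. simpl in Hl. pose proof (filter_len_le (fun t => negb (mono_eq w t)) p'). lia.
    + intro w'. rewrite coeff_filter_other. destruct (wpair_dec w' w); auto.
Qed.

Lemma zero_coeff_peval p h : (forall w, coeff p w = C0) -> peval p T1 T2 h = hzero.
Proof. intros. eapply zero_coeff_peval_aux; eauto. Qed.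

End Group.

Ltac gen_inner := repeat match goal with |- context [hinner ?a ?b] => generalize (hinner a b); intro end.

Lemma abs_le_sqrt a b : Rabs a <= sqrt (a*a + b*b).
Proof.
  rewrite <- sqrt_Rsqr_abs. apply sqrt_le_1_alt. unfold Rsqr. nra.
Qed.

Lemma sqrt_le_abs_sum a b : sqrt (a*a + b*b) <= Rabs a + Rabs b.
Proof.
  pose proof (Rabs_pos a). pose proof (Rabs_pos b).
  rewrite <- (sqrt_square (Rabs a + Rabs b)) by lra.
  apply sqrt_le_1_alt.
  assert (Rabs a * Rabs a = a * a) by (rewrite <- Rabs_mult; apply Rabs_right; nra).
  assert (Rabs b * Rabs b = b * b) by (rewrite <- Rabs_mult; apply Rabs_right; nra).
  nra.
Qed.

Lemma sqrt_le_l A B : 0 <= A -> 0 <= B -> sqrt A <= sqrt (A + B).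
Proof. intros. apply sqrt_le_1_alt. lra. Qed.

Lemma sqrt_sum_le A B : 0 <= A -> 0 <= B -> sqrt (A + B) <= sqrt A + sqrt B.
Proof.
  intros. pose proof (sqrt_pos A). pose proof (sqrt_pos B).
  rewrite <- (sqrt_square (sqrt A + sqrt B)) by lra.
  apply sqrt_le_1_alt.
  pose proof (sqrt_sqrt A H). pose proof (sqrt_sqrt B H0). nra.
Qed.

Definition unitH : Hilbert.
Proof.
  refine (@Build_Hilbert unit tt (fun _ _ => tt) (fun _ => tt) (fun _ _ => tt) (fun _ _ => C0)
    _ _ _ _ _ _ _ _ _ _ _ _ _ _);
  intros; repeat match goal with u : unit |- _ => destruct u end; try reflexivity; try Csolve.
  all: try (simpl; lra).
  all: try (exists tt; intros eps Heps; exists 0%nat; intros; simpl; rewrite sqrt_0; lra).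
Defined.

Definition Copp (a : C) : C := mkC (- re a) (- im a).

Lemma CH_norm a b :
  re (Cmul (Cadd a (Copp b)) (Cconj (Cadd a (Copp b)))) =
  (re a - re b) * (re a - re b) + (im a - im b) * (im a - im b).
Proof. destruct a, b; simpl; ring. Qed.

Lemma CH_complete : forall u : nat -> C,
    (forall eps, 0 < eps -> exists N, forall m n, (N <= m)%nat -> (N <= n)%nat ->
       sqrt (re (Cmul (Cadd (u m) (Copp (u n))) (Cconj (Cadd (u m) (Copp (u n)))))) < eps) ->
    exists l, forall eps, 0 < eps -> exists N, forall n, (N <= n)%nat ->
       sqrt (re (Cmul (Cadd (u n) (Copp l)) (Cconj (Cadd (u n) (Copp l))))) < eps.
Proof.
  intros u Hc.
  assert (Cr : Cauchy_crit (fun n => re (u n))).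
  { intros eps He. destruct (Hc eps He) as [N HN]. exists N. intros n m Hn Hm.
    specialize (HN n m Hn Hm). rewrite CH_norm in HN. unfold R_dist.
    pose proof (abs_le_sqrt (re (u n) - re (u m)) (im (u n) - im (u m))). lra. }
  assert (Ci : Cauchy_crit (fun n => im (u n))).
  { intros eps He. destruct (Hc eps He) as [N HN]. exists N. intros n m Hn Hm.
    specialize (HN n m Hn Hm). rewrite CH_norm in HN. unfold R_dist.
    pose proof (abs_le_sqrt (im (u n) - im (u m)) (re (u n) - re (u m))) as P. rewrite Rplus_comm in P. lra. }
  destruct (R_complete _ Cr) as [lr Hr]. destruct (R_complete _ Ci) as [li Hi].
  exists (mkC lr li). intros eps He.
  destruct (Hr (eps/2)) as [N1 HN1]; [lra|]. destruct (Hi (eps/2)) as [N2 HN2]; [lra|].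
  exists (max N1 N2). intros n Hn. rewrite CH_norm. simpl.
  specialize (HN1 n ltac:(lia)). specialize (HN2 n ltac:(lia)). unfold R_dist in *.
  pose proof (sqrt_le_abs_sum (re (u n) - lr) (im (u n) - li)). lra.
Qed.

Definition CH : Hilbert.
Proof.
  refine (@Build_Hilbert C C0 Cadd Copp Cmul (fun a b => Cmul a (Cconj b))
    _ _ _ _ _ _ _ _ _ _ _ _ _ CH_complete); unfold Copp;
  intros; try Csolve.
  - destruct x; simpl; nra.
  - destruct x as [a b]. unfold C0, Cmul, Cconj in H. simpl in H. injection H; intros.
    unfold C0. f_equal; nra.
Defined.

Section Prod.
Variables K H : Hilbert.

Lemma prod_complete : forall u : nat -> K * H,
    (forall eps, 0 < eps -> exists N, forall m n, (N <= m)%nat -> (N <= n)%nat ->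
       sqrt (re (Cadd (hinner (hadd (fst (u m)) (hopp (fst (u n)))) (hadd (fst (u m)) (hopp (fst (u n)))))
                      (hinner (hadd (snd (u m)) (hopp (snd (u n)))) (hadd (snd (u m)) (hopp (snd (u n))))))) < eps) ->
    exists l : K * H, forall eps, 0 < eps -> exists N, forall n, (N <= n)%nat ->
       sqrt (re (Cadd (hinner (hadd (fst (u n)) (hopp (fst l))) (hadd (fst (u n)) (hopp (fst l))))
                      (hinner (hadd (snd (u n)) (hopp (snd l))) (hadd (snd (u n)) (hopp (snd l)))))) < eps.
Proof.
  intros u Hc.
  destruct (hcomplete K (fun n => fst (u n))) as [l1 H1].
  { intros eps He. destruct (Hc eps He) as [N HN]. exists N. intros m n Hm Hn.
    specialize (HN m n Hm Hn). simpl in HN.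
    eapply Rle_lt_trans; [|exact HN]. apply sqrt_le_l; apply hinner_pos. }
  destruct (hcomplete H (fun n => snd (u n))) as [l2 H2].
  { intros eps He. destruct (Hc eps He) as [N HN]. exists N. intros m n Hm Hn.
    specialize (HN m n Hm Hn). simpl in HN.
    eapply Rle_lt_trans; [|exact HN]. rewrite Rplus_comm. apply sqrt_le_l; apply hinner_pos. }
  exists (l1, l2). intros eps He.
  destruct (H1 (eps/2)) as [N1 HN1]; [lra|]. destruct (H2 (eps/2)) as [N2 HN2]; [lra|].
  exists (max N1 N2). intros n Hn. simpl.
  specialize (HN1 n ltac:(lia)). specialize (HN2 n ltac:(lia)).
  eapply Rle_lt_trans; [apply sqrt_sum_le; apply hinner_pos|]. lra.
Qed.

Definition prodH : Hilbert.
Proof.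
  refine (@Build_Hilbert (K * H) (hzero, hzero)
    (fun x y => (hadd (fst x) (fst y), hadd (snd x) (snd y)))
    (fun x => (hopp (fst x), hopp (snd x)))
    (fun a x => (hscal a (fst x), hscal a (snd x)))
    (fun x y => Cadd (hinner (fst x) (fst y)) (hinner (snd x) (snd y)))
    _ _ _ _ _ _ _ _ _ _ _ _ _ prod_complete); intros.
  - simpl. f_equal; apply hadd_assoc.
  - simpl. f_equal; apply hadd_comm.
  - destruct x; simpl. rewrite !hadd_0. reflexivity.
  - simpl. f_equal; apply hadd_opp.
  - destruct x; simpl. rewrite !hscal_1. reflexivity.
  - simpl. f_equal; apply hscal_assoc.
  - simpl. f_equal; apply hscal_distr_v.
  - simpl. f_equal; apply hscal_distr_s.
  - simpl. rewrite !hinner_add_l. gen_inner. intros; Csolve.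
  - simpl. rewrite !hinner_scal_l. gen_inner. intros; Csolve.
  - simpl. rewrite (hinner_conj K (fst x)), (hinner_conj H (snd x)). gen_inner. intros; Csolve.
  - simpl. pose proof (hinner_pos K (fst x)). pose proof (hinner_pos H (snd x)). lra.
  - destruct x as [a b]. simpl in *.
    pose proof (hinner_pos K a). pose proof (hinner_pos H b).
    pose proof (im_inner_self K a). pose proof (im_inner_self H b).
    assert (re (hinner a a) = 0 /\ re (hinner b b) = 0) as [E1 E2].
    { unfold C0, Cadd in H0. injection H0; intros. lra. }
    f_equal; apply hinner_def; [destruct (hinner a a) | destruct (hinner b b)]; simpl in *; subst; reflexivity.
Defined.

End Prod.

Lemma Cadd_0l z : Cadd C0 z = z.
Proof. destruct z; unfold Cadd, C0; simpl; f_equal; ring. Qed.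
Lemma Cadd_0r z : Cadd z C0 = z.
Proof. destruct z; unfold Cadd, C0; simpl; f_equal; ring. Qed.

Fixpoint Pow (n : nat) (H : Hilbert) : Hilbert :=
  match n with O => unitH | S m => prodH H (Pow m H) end.

Fixpoint get {H : Hilbert} {n : nat} (i : Fin.t n) : Pow n H -> H :=
  match i in Fin.t n return Pow n H -> H with
  | Fin.F1 => fun v => fst v
  | Fin.FS j => fun v => get j (snd v)
  end.

Fixpoint put {H : Hilbert} {n : nat} (i : Fin.t n) : H -> Pow n H :=
  match i in Fin.t n return H -> Pow n H with
  | @Fin.F1 m => fun x => (x, @hzero (Pow m H)) : Pow (S m) H
  | @Fin.FS m j => fun x => (@hzero H, put j x) : Pow (S m) H
  end.

Fixpoint pmap {H H' : Hilbert} (f : H -> H') (n : nat) : Pow n H -> Pow n H' :=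
  match n return Pow n H -> Pow n H' with
  | O => fun _ => tt
  | S m => fun v => (f (fst v), pmap f m (snd v))
  end.

Lemma vsum_prod (K H : Hilbert) m (f : Fin.t m -> K) (g : Fin.t m -> H) :
  @fin_vsum (prodH K H) m (fun i => (f i, g i)) = (fin_vsum m f, fin_vsum m g).
Proof.
  revert f g; induction m; intros f g; simpl; auto.
  rewrite (IHm (fun i => f (Fin.FS i)) (fun i => g (Fin.FS i))). reflexivity.
Qed.

Lemma vsum_zero (H : Hilbert) m : @fin_vsum H m (fun _ => hzero) = hzero.
Proof. induction m; simpl; auto. rewrite IHm, hadd_0. reflexivity. Qed.

Section PowLemmas.
Variable H : Hilbert.

Lemma get_zero n (i : Fin.t n) : get i (@hzero (Pow n H)) = hzero.
Proof. induction i; simpl; auto. Qed.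

Lemma get_put_same n (i : Fin.t n) (x : H) : get i (put i x) = x.
Proof. induction i; simpl; auto. Qed.

Lemma get_put_diff n (i j : Fin.t n) (x : H) : i <> j -> get i (put j x) = hzero.
Proof.
  revert j. induction i as [m|m i IH]; intro j.
  - refine (Fin.caseS' j (fun j => Fin.F1 <> j -> get Fin.F1 (put j x) = hzero) _ _).
    + intro C; exfalso; apply C; reflexivity.
    + intros p _. reflexivity.
  - refine (Fin.caseS' j (fun j => Fin.FS i <> j -> get (Fin.FS i) (put j x) = hzero) _ _).
    + intros _. simpl. apply get_zero.
    + intros p Hp. simpl. apply IH. intro E; apply Hp; subst; reflexivity.
Qed.

Lemma put_add n (i : Fin.t n) (x y : H) : put i (hadd x y) = hadd (put i x) (put i y).
Proof. induction i; simpl; rewrite ?IHi, hadd_0; reflexivity. Qed.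

Lemma put_scal n (i : Fin.t n) a (x : H) : put i (hscal a x) = hscal a (put i x).
Proof. induction i; simpl; rewrite ?IHi, hscal_zero; reflexivity. Qed.

Lemma inner_put_l n (i : Fin.t n) (x : H) v : hinner (put i x) v = hinner x (get i v).
Proof.
  induction i; simpl.
  - rewrite inner_0l, Cadd_0r. reflexivity.
  - rewrite inner_0l, Cadd_0l, IHi. reflexivity.
Qed.

Lemma get_le n (i : Fin.t n) (v : Pow n H) :
  re (hinner (get i v) (get i v)) <= re (hinner v v).
Proof.
  induction i; simpl.
  - apply Rle_trans with (re (hinner (fst v) (fst v)) + 0); [lra| apply Rplus_le_compat_l, hinner_pos].
  - apply Rle_trans with (0 + re (hinner (snd v) (snd v))); [rewrite Rplus_0_l; apply IHi|].
    apply Rplus_le_compat_r, hinner_pos.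
Qed.

Lemma vsum_put_get n (v : Pow n H) : fin_vsum n (fun i => put i (get i v)) = v.
Proof.
  induction n; simpl.
  - destruct v. reflexivity.
  - rewrite (vsum_prod H (Pow n H) n (fun _ => hzero) (fun i => put i (get i (snd v)))).
    rewrite vsum_zero, IHn. destruct v. simpl. rewrite hadd_0r, hadd_0. reflexivity.
Qed.

Lemma pmap_ople (f : H -> H) n :
  (forall a, im (hinner (hadd a (hopp (f a))) a) = 0 /\ 0 <= re (hinner (hadd a (hopp (f a))) a)) ->
  forall v : Pow n H, im (hinner (hadd v (hopp (pmap f n v))) v) = 0 /\
                      0 <= re (hinner (hadd v (hopp (pmap f n v))) v).
Proof.
  intro Hf. induction n; intro v; simpl.
  - lra.
  - destruct (Hf (fst v)). destruct (IHn (snd v)). match goal with |- ?a + ?b = 0 /\ 0 <= ?c + ?d => assert (a = 0) by exact H0; assert (b = 0) by exact H2; assert (0 <= c) by exact H1; assert (0 <= d) by exact H3 end; lra.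
Qed.

End PowLemmas.

Section PmapLemmas.
Variables H H' H'' : Hilbert.

Lemma get_pmap (f : H -> H') n (i : Fin.t n) v : get i (pmap f n v) = f (get i v).
Proof. induction i; simpl; auto. Qed.

Lemma pmap_zero (f : H -> H') n : f hzero = hzero -> pmap f n hzero = hzero.
Proof. intro E. induction n; simpl; auto. rewrite E, IHn. reflexivity. Qed.

Lemma pmap_put (f : H -> H') n (i : Fin.t n) x : f hzero = hzero -> pmap f n (put i x) = put i (f x).
Proof.
  intro E. induction i; simpl.
  - rewrite pmap_zero; auto.
  - rewrite E, IHi. reflexivity.
Qed.

Lemma pmap_add (f : H -> H') n :
  (forall x y, f (hadd x y) = hadd (f x) (f y)) ->
  forall v w, pmap f n (hadd v w) = hadd (pmap f n v) (pmap f n w).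
Proof. intros Hf. induction n; intros v w; simpl; auto. rewrite Hf, IHn. reflexivity. Qed.

Lemma pmap_scal (f : H -> H') n :
  (forall a x, f (hscal a x) = hscal a (f x)) ->
  forall a v, pmap f n (hscal a v) = hscal a (pmap f n v).
Proof. intros Hf. induction n; intros a v; simpl; auto. rewrite Hf, IHn. reflexivity. Qed.

Lemma inner_pmap_adj (f : H -> H') (g : H' -> H) n :
  (forall a b, hinner (f a) b = hinner a (g b)) ->
  forall v w, hinner (pmap f n v) w = hinner v (pmap g n w).
Proof. intros Hf. induction n; intros v w; simpl; auto. rewrite Hf, IHn. reflexivity. Qed.

Lemma pmap_comp (f : H' -> H'') (g : H -> H') n v :
  pmap f n (pmap g n v) = pmap (fun a => f (g a)) n v.
Proof. induction n; simpl; auto. rewrite IHn. reflexivity. Qed.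

Lemma pmap_ext (f g : H -> H') n v : (forall a, f a = g a) -> pmap f n v = pmap g n v.
Proof. intro E. induction n; simpl; auto. rewrite E, IHn. reflexivity. Qed.

Lemma vsum_pmap m (f : Fin.t m -> H -> H') n v :
  fin_vsum m (fun j => pmap (f j) n v) = pmap (fun a => fin_vsum m (fun j => f j a)) n v.
Proof.
  induction n; simpl.
  - destruct (fin_vsum m _). reflexivity.
  - rewrite (vsum_prod H' (Pow n H') m (fun j => f j (fst v)) (fun j => pmap (f j) n (snd v))).
    rewrite IHn. reflexivity.
Qed.

End PmapLemmas.

Lemma pmap_id (H : Hilbert) n (v : Pow n H) : pmap (fun a => a) n v = v.
Proof. induction n; simpl. destruct v; auto. rewrite IHn. destruct v; auto. Qed.

Lemma hopp_zero (H : Hilbert) : hopp (@hzero H) = hzero.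
Proof. rewrite hopp_scal, hscal_zero. reflexivity. Qed.

Lemma get_add (H : Hilbert) n (i : Fin.t n) (v w : Pow n H) : get i (hadd v w) = hadd (get i v) (get i w).
Proof. induction i; simpl; auto. Qed.

Lemma get_scal (H : Hilbert) n (i : Fin.t n) a (v : Pow n H) : get i (hscal a v) = hscal a (get i v).
Proof. induction i; simpl; auto. Qed.

Section Fock.
Variable B : Hilbert.
Variable n : nat.

Fixpoint F (d : nat) : Hilbert :=
  match d with O => B | S d' => prodH B (Pow n (F d')) end.

Fixpoint trunc (d : nat) : F (S d) -> F d :=
  match d return F (S d) -> F d with
  | O => fun x => fst x
  | S d' => fun x => (fst x, pmap (trunc d') n (snd x)) : F (S d')
  end.

Fixpoint extend (d : nat) : F d -> F (S d) :=
  match d return F d -> F (S d) with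
  | O => fun k => (k, @hzero (Pow n B)) : F 1
  | S d' => fun x => (fst x, pmap (extend d') n (snd x)) : F (S (S d'))
  end.

Definition Sop (d : nat) (i : Fin.t n) : F d -> F d :=
  match d return F d -> F d with
  | O => fun _ => hzero
  | S d' => fun x => (@hzero B, put i (trunc d' x)) : F (S d')
  end.

Definition Sadj (d : nat) (i : Fin.t n) : F d -> F d :=
  match d return F d -> F d with
  | O => fun _ => hzero
  | S d' => fun x => extend d' (get i (snd x))
  end.

Fixpoint lift (d : nat) (A : B -> B) : F d -> F d :=
  match d return F d -> F d with
  | O => A
  | S d' => fun x => (A (fst x), pmap (lift d' A) n (snd x)) : F (S d')
  end.

Definition top (d : nat) : F d -> B :=
  match d return F d -> B with
  | O => fun x => x
  | S _ => fun x => fst x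
  end.

Fixpoint coord (al : word n) (d : nat) {struct al} : F d -> B :=
  match al with
  | nil => top d
  | i :: al' => match d return F d -> B with
               | O => fun _ => hzero
               | S d' => fun x => coord al' d' (get i (snd x))
               end
  end.

Definition vac (d : nat) (w : B) : F d :=
  match d return F d with
  | O => w
  | S d' => (w, @hzero (Pow n (F d'))) : F (S d')
  end.

Lemma trunc_add d x y : trunc d (hadd x y) = hadd (trunc d x) (trunc d y).
Proof.
  revert x y; induction d; intros x y; [reflexivity|].
  simpl. rewrite (pmap_add _ _ (trunc d) n IHd). reflexivity.
Qed.

Lemma trunc_scal d a x : trunc d (hscal a x) = hscal a (trunc d x).
Proof.
  revert a x; induction d; intros a x; [reflexivity|].
  simpl. rewrite (pmap_scal _ _ (trunc d) n IHd). reflexivity.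
Qed.

Lemma trunc_extend d x : trunc d (extend d x) = x.
Proof.
  induction d; [reflexivity|]. simpl. rewrite pmap_comp.
  rewrite (pmap_ext _ _ _ (fun a => a)) by auto. rewrite pmap_id. destruct x; reflexivity.
Qed.

Lemma inner_trunc d x z : hinner (trunc d x) z = hinner x (extend d z).
Proof.
  revert x z; induction d; intros x z; simpl.
  - rewrite inner_0r, Cadd_0r. reflexivity.
  - rewrite (inner_pmap_adj _ _ (trunc d) (extend d) n IHd). reflexivity.
Qed.

Lemma Sop_add d i x y : Sop d i (hadd x y) = hadd (Sop d i x) (Sop d i y).
Proof.
  destruct d; unfold Sop; cbv beta iota.
  - rewrite hadd_0. reflexivity.
  - rewrite trunc_add, put_add. simpl. rewrite hadd_0. reflexivity.
Qed.

Lemma Sop_scal d i a x : Sop d i (hscal a x) = hscal a (Sop d i x).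
Proof.
  destruct d; unfold Sop; cbv beta iota.
  - rewrite hscal_zero. reflexivity.
  - rewrite trunc_scal, put_scal. simpl. rewrite hscal_zero. reflexivity.
Qed.

Lemma Sop_adj d i : is_adjoint (Sop d i) (Sadj d i).
Proof.
  intros x y. destruct d; unfold Sop, Sadj; cbv beta iota.
  - rewrite inner_0l, inner_0r. reflexivity.
  - simpl. rewrite inner_0l, Cadd_0l, inner_put_l, inner_trunc. reflexivity.
Qed.

Lemma Sop_ople d : op_le (fun h => fin_vsum n (fun i => Sop d i (Sadj d i h))) (fun h => h).
Proof.
  intro h. destruct d.
  - simpl. rewrite vsum_zero, hopp_zero, hadd_0r. split; [apply im_inner_self|apply hinner_pos].
  - assert (E : (fun i => Sop (S d) i (Sadj (S d) i h)) =
                (fun i => ((@hzero B, put i (get i (snd h))) : F (S d)))).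
    { apply functional_extensionality. intro i. simpl. rewrite trunc_extend. reflexivity. }
    rewrite E. clear E.
    assert (E2 : @fin_vsum (F (S d)) n (fun i => ((@hzero B, put i (get i (snd h))) : F (S d)))
                 = ((@hzero B, snd h) : F (S d))).
    { etransitivity; [apply (vsum_prod B (Pow n (F d)) n (fun _ => hzero) (fun i => put i (get i (snd h))))|].
      rewrite vsum_zero, vsum_put_get. reflexivity. }
    rewrite E2. clear E2. destruct h as [k v]. simpl.
    rewrite hopp_zero, hadd_0r, hadd_opp, inner_0l. simpl. rewrite !Rplus_0_r.
    split; [apply im_inner_self|apply hinner_pos].
Qed.

Lemma row_S d : row_contraction n (Sop d).
Proof.
  split.
  - intro i. split; [intros; apply Sop_add|]. split; [intros; apply Sop_scal|].
    exists 1. intro x. rewrite Rmult_1_l. apply (adj_contr (F d) n (Sop d)).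
    exists (Sadj d). split; [apply Sop_adj|apply Sop_ople].
  - exists (Sadj d). split; [apply Sop_adj|apply Sop_ople].
Qed.

Lemma lift_zero d A : A hzero = hzero -> lift d A hzero = hzero.
Proof.
  intro E. induction d; simpl; auto. rewrite E, pmap_zero; auto.
Qed.

Lemma lift_add d A : (forall x y, A (hadd x y) = hadd (A x) (A y)) ->
  forall x y, lift d A (hadd x y) = hadd (lift d A x) (lift d A y).
Proof.
  intro HA. induction d; intros x y; simpl; auto.
  rewrite HA, (pmap_add _ _ (lift d A) n IHd). reflexivity.
Qed.

Lemma lift_scal d A : (forall a x, A (hscal a x) = hscal a (A x)) ->
  forall a x, lift d A (hscal a x) = hscal a (lift d A x).
Proof.
  intro HA. induction d; intros a x; simpl; auto.
  rewrite HA, (pmap_scal _ _ (lift d A) n IHd). reflexivity.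
Qed.

Lemma lift_adj d A A' : (forall a b, hinner (A a) b = hinner a (A' b)) ->
  is_adjoint (lift d A) (lift d A').
Proof.
  intro HA. induction d; intros x y; simpl; auto.
  rewrite HA, (inner_pmap_adj _ _ (lift d A) (lift d A') n IHd). reflexivity.
Qed.

Lemma lift_comp d A A' x : lift d A (lift d A' x) = lift d (fun k => A (A' k)) x.
Proof.
  revert x; induction d; intro x; simpl; auto.
  rewrite pmap_comp. f_equal. apply pmap_ext. auto.
Qed.

Lemma vsum_lift m d (A : Fin.t m -> B -> B) x :
  fin_vsum m (fun j => lift d (A j) x) = lift d (fun k => fin_vsum m (fun j => A j k)) x.
Proof.
  revert x; induction d; intro x; [reflexivity|].
  change (F (S d)) with (prodH B (Pow n (F d))). simpl.
  rewrite (vsum_prod B (Pow n (F d)) m (fun j => A j (fst x)) (fun j => pmap (lift d (A j)) n (snd x))).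
  rewrite vsum_pmap. f_equal. apply pmap_ext. auto.
Qed.

Lemma lift_ople d P :
  (forall a, im (hinner (hadd a (hopp (P a))) a) = 0 /\ 0 <= re (hinner (hadd a (hopp (P a))) a)) ->
  op_le (lift d P) (fun h => h).
Proof.
  intros HP. induction d; intro h.
  - apply HP.
  - simpl. destruct (HP (fst h)) as [H0 H1].
    destruct (pmap_ople _ (lift d P) n IHd (snd h)) as [H2 H3].
    match goal with |- ?a + ?b = 0 /\ 0 <= ?c + ?d => assert (a = 0) by exact H0; assert (b = 0) by exact H2; assert (0 <= c) by exact H1; assert (0 <= d) by exact H3 end; lra.
Qed.

Lemma row_lift m d (X : Fin.t m -> op B) : row_contraction m X ->
  row_contraction m (fun j => lift d (X j)).
Proof.
  intros [BL [A [Hadj Hle]]].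
  assert (R : exists A' : Fin.t m -> op (F d),
    (forall i, is_adjoint (lift d (X i)) (A' i)) /\
    op_le (fun h => fin_vsum m (fun i => lift d (X i) (A' i h))) (fun h => h)).
  { exists (fun j => lift d (A j)). split.
    - intro i. apply lift_adj. apply Hadj.
    - intro h. rewrite (functional_extensionality _ _ (fun i => lift_comp d (X i) (A i) h)).
      rewrite (vsum_lift m d (fun j k => X j (A j k))).
      apply (lift_ople d (fun k => fin_vsum m (fun j => X j (A j k)))). apply Hle. }
  split; auto.
  intro i. destruct (BL i) as [Ha [Hs _]]. split; [apply lift_add; auto|].
  split; [apply lift_scal; auto|].
  exists 1. intro x. rewrite Rmult_1_l. apply (adj_contr (F d) m _ R).
Qed.

Lemma trunc_lift d A x : trunc d (lift (S d) A x) = lift d A (trunc d x).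
Proof.
  revert x; induction d; intro x; [reflexivity|].
  simpl. rewrite !pmap_comp. f_equal. apply pmap_ext. auto.
Qed.

Lemma Sop_lift_comm d i A x : A hzero = hzero -> Sop d i (lift d A x) = lift d A (Sop d i x).
Proof.
  intro E. destruct d.
  - simpl. auto.
  - unfold Sop; cbv beta iota. rewrite trunc_lift. simpl.
    rewrite E, pmap_put by (apply lift_zero; auto). reflexivity.
Qed.

Lemma coord_zero al d : coord al d hzero = hzero.
Proof.
  revert d; induction al; intro d; destruct d; simpl; auto.
  rewrite get_zero. apply IHal.
Qed.

Lemma coord_add al d x y : coord al d (hadd x y) = hadd (coord al d x) (coord al d y).
Proof.
  revert d x y; induction al; intros d x y; destruct d; simpl; auto.
  - rewrite hadd_0. reflexivity.
  - rewrite get_add. apply IHal.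
Qed.

Lemma coord_scal al d a x : coord al d (hscal a x) = hscal a (coord al d x).
Proof.
  revert d x; induction al; intros d x; destruct d; simpl; auto.
  - rewrite hscal_zero. reflexivity.
  - rewrite get_scal. apply IHal.
Qed.

Lemma coord_trunc al d x : (length al <= d)%nat -> coord al d (trunc d x) = coord al (S d) x.
Proof.
  revert al x; induction d; intros al x Hl.
  - destruct al; simpl in *; [reflexivity|lia].
  - destruct al as [|i al]; [reflexivity|]. simpl in *.
    rewrite get_pmap. apply IHd. lia.
Qed.

Lemma coord_vac_nil d w : coord nil d (vac d w) = w.
Proof. destruct d; reflexivity. Qed.

Lemma coord_vac_cons i al d w : coord (i :: al) d (vac d w) = hzero.
Proof. destruct d; simpl; auto. rewrite get_zero. apply coord_zero. Qed.

Lemma coord_S d w : forall ga al, (length al <= d)%nat ->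
  coord al d (eval_word (Sop d) ga (vac d w)) = if word_eq_dec ga al then w else hzero.
Proof.
  induction ga as [|j ga IH]; intros al Hl; cbn [eval_word fold_right].
  - destruct al as [|i al].
    + rewrite coord_vac_nil. destruct (@word_eq_dec n nil nil); congruence.
    + rewrite coord_vac_cons. destruct (@word_eq_dec n nil (i :: al)); congruence.
  - destruct d as [|d].
    + rewrite coord_zero. destruct al; simpl in Hl; [|lia].
      destruct (word_eq_dec (j :: ga) nil); congruence.
    + destruct al as [|i al].
      * simpl. destruct (word_eq_dec (j :: ga) nil); congruence.
      * cbn [coord eval_word fold_right Sop snd]. destruct (Fin.eq_dec i j) as [Eij|Nij].
        -- subst i. rewrite get_put_same. simpl in Hl. rewrite coord_trunc by lia.
           rewrite IH by lia.
           destruct (word_eq_dec ga al), (word_eq_dec (j :: ga) (j :: al)); congruence.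
        -- rewrite get_put_diff by auto. rewrite coord_zero.
           destruct (word_eq_dec (j :: ga) (i :: al)); congruence.
Qed.

Lemma coord_lift al d A x : A hzero = hzero -> coord al d (lift d A x) = A (coord al d x).
Proof.
  intro E. revert d x; induction al; intros d x; destruct d; simpl; auto.
  rewrite get_pmap. apply IHal.
Qed.

Lemma lift_vac d A w : A hzero = hzero -> lift d A (vac d w) = vac d (A w).
Proof.
  intro E. destruct d; simpl; auto. rewrite pmap_zero; auto. apply lift_zero; auto.
Qed.

Lemma coord_norm al d x : re (hinner (coord al d x) (coord al d x)) <= re (hinner x x).
Proof.
  revert d x; induction al; intros d x; destruct d; simpl.
  - lra.
  - apply Rle_trans with (re (hinner (fst x) (fst x)) + 0); [lra| apply Rplus_le_compat_l, hinner_pos].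
  - rewrite inner_0l. apply hinner_pos.
  - eapply Rle_trans; [apply IHal|]. eapply Rle_trans; [apply get_le|].
    apply Rle_trans with (0 + re (hinner (snd x) (snd x))); [lra|].
    apply Rplus_le_compat_r, hinner_pos.
Qed.

Lemma vac_norm d w : re (hinner (vac d w) (vac d w)) = re (hinner w w).
Proof. destruct d; simpl; auto. rewrite inner_0l. simpl. ring. Qed.

End Fock.

Section Main.
Variables n1 n2 : nat.

Lemma Pn_facts (H : Hilbert) (T1 : Fin.t n1 -> op H) (T2 : Fin.t n2 -> op H) :
  in_Pn n1 n2 T1 T2 ->
  lin H T1 /\ lin H T2 /\ (forall i h, hnorm (T1 i h) <= hnorm h) /\
  (forall i h, hnorm (T2 i h) <= hnorm h) /\ (forall i j h, T1 i (T2 j h) = T2 j (T1 i h)).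
Proof.
  intros [R1 [R2 Cm]].
  split; [intro i; destruct (proj1 R1 i) as [A1 [A2 _]]; split; [exact A1|exact A2]|].
  split; [intro i; destruct (proj1 R2 i) as [A1 [A2 _]]; split; [exact A1|exact A2]|].
  split; [apply (rowc_contr _ _ _ R1)|]. split; [apply (rowc_contr _ _ _ R2)|]. exact Cm.
Qed.

Lemma peval_opnorm_ex (H : Hilbert) (T1 : Fin.t n1 -> op H) (T2 : Fin.t n2 -> op H) p :
  in_Pn n1 n2 T1 T2 -> exists r, is_opnorm (peval p T1 T2) r.
Proof.
  intro HP. destruct (Pn_facts _ _ _ HP) as [L1 [L2 [K1 [K2 Cm]]]].
  apply (opnorm_exists _ _ (psum n1 n2 p)); [|apply psum_nonneg].
  intro h. apply peval_bound; auto.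
Qed.

Lemma unorm_bound (p : ncpoly n1 n2) : forall r, unorm_set p r -> r <= psum n1 n2 p.
Proof.
  intros r [HH [T1 [T2 [HP Hr]]]]. destruct (Pn_facts _ _ _ HP) as [L1 [L2 [K1 [K2 Cm]]]].
  apply (opnorm_least _ _ _ _ Hr); [|apply psum_nonneg].
  intro h. apply peval_bound; auto.
Qed.

Lemma hnorm_unit (x : unitH) : hnorm x = 0.
Proof. unfold hnorm. simpl. apply sqrt_0. Qed.

Lemma row_unit n : row_contraction n (fun _ (_ : unitH) => tt).
Proof.
  split.
  - intro i. split; [reflexivity|]. split; [reflexivity|]. exists 0. intro x.
    rewrite !hnorm_unit. lra.
  - exists (fun _ _ => tt). split.
    + intros i x y. reflexivity.
    + intro h. simpl. lra.
Qed.

Lemma unorm_nonempty (p : ncpoly n1 n2) : unorm_set p 0.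
Proof.
  exists unitH, (fun _ _ => tt), (fun _ _ => tt). split.
  - split; [apply row_unit|]. split; [apply row_unit|]. reflexivity.
  - split.
    + intros y [h [_ ->]]. rewrite hnorm_unit. lra.
    + intros b Hb. apply Hb. exists tt. split; [rewrite hnorm_unit; lra|]. rewrite hnorm_unit. reflexivity.
Qed.

Definition Nu (p : ncpoly n1 n2) : R :=
  proj1_sig (completeness (unorm_set p) (ex_intro _ (psum n1 n2 p) (unorm_bound p))
    (ex_intro _ 0 (unorm_nonempty p))).

Lemma Nu_lub (p : ncpoly n1 n2) : is_lub (unorm_set p) (Nu p).
Proof. unfold Nu. destruct completeness. simpl. auto. Qed.

Lemma Nu_ge (p : ncpoly n1 n2) r : unorm_set p r -> r <= Nu p.
Proof. intro. apply (proj1 (Nu_lub p)). auto. Qed.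

Lemma Nu_le (p : ncpoly n1 n2) b : (forall r, unorm_set p r -> r <= b) -> Nu p <= b.
Proof. intro. apply (proj2 (Nu_lub p)). auto. Qed.

Lemma Nu_nonneg (p : ncpoly n1 n2) : 0 <= Nu p.
Proof. apply Nu_ge, unorm_nonempty. Qed.

Definition Km (d2 : nat) := F CH n2 d2.
Definition Hm (d1 d2 : nat) := F (Km d2) n1 d1.
Definition Xm d1 d2 (i : Fin.t n1) : op (Hm d1 d2) := Sop (Km d2) n1 d1 i.
Definition Ym d1 d2 (j : Fin.t n2) : op (Hm d1 d2) := lift (Km d2) n1 d1 (Sop CH n2 d2 j).
Definition Om d1 d2 : Hm d1 d2 := vac (Km d2) n1 d1 (vac CH n2 d2 C1).

Lemma Sop_hzero B n d i : Sop B n d i hzero = hzero.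
Proof. apply homog_zero. intros a x. apply Sop_scal. Qed.

Lemma model_Pn d1 d2 : in_Pn n1 n2 (Xm d1 d2) (Ym d1 d2).
Proof.
  split; [apply row_S|]. split.
  - apply row_lift, row_S.
  - intros i j h. unfold Xm, Ym. apply Sop_lift_comm. apply Sop_hzero.
Qed.

Lemma ew_lift_vac B n m d (A : Fin.t m -> op B) w y :
  (forall j, A j hzero = hzero) ->
  eval_word (fun j => lift B n d (A j)) y (vac B n d w) = vac B n d (eval_word A y w).
Proof.
  intro E. induction y; [reflexivity|].
  transitivity (lift B n d (A a) (eval_word (fun j => lift B n d (A j)) y (vac B n d w))); [reflexivity|].
  rewrite IHy. apply (lift_vac B n d (A a) (eval_word A y w)). auto.
Qed.

Lemma model_coeff (p : ncpoly n1 n2) (a : word n1) (b : word n2) :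
  coord CH n2 b (length b) (coord (Km (length b)) n1 a (length a)
     (peval p (Xm (length a) (length b)) (Ym (length a) (length b)) (Om (length a) (length b))))
  = coeff p (a, b).
Proof.
  induction p as [|[[x y] c] p IH].
  - unfold peval. simpl fold_right. rewrite !coord_zero. reflexivity.
  - rewrite peval_cons, !coord_add, !coord_scal, IH, coeff_cons.
    unfold mon, Om, Ym, Xm.
    rewrite (ew_lift_vac (Km (length b)) n1 n2 (length a) (Sop CH n2 (length b))) by (intro; apply Sop_hzero).
    rewrite coord_S by lia.
    unfold mono_eq. simpl fst. simpl snd.
    destruct (word_eq_dec x a).
    + rewrite coord_S by lia. destruct (word_eq_dec y b); simpl; generalize (coeff p (a, b)); intros; Csolve.
    + rewrite coord_zero. simpl. generalize (coeff p (a, b)); intros; Csolve.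
Qed.

Lemma hnorm_Om d1 d2 : hnorm (Om d1 d2) = 1.
Proof.
  unfold hnorm, Om, Hm. rewrite (vac_norm (Km d2) n1 d1). unfold Km. rewrite (vac_norm CH n2 d2). simpl.
  replace (1 * 1 - 0 * - 0) with 1 by ring. apply sqrt_1.
Qed.

Lemma Cmod_le_coord d1 d2 a b (z : Hm d1 d2) :
  Cmod (coord CH n2 b d2 (coord (Km d2) n1 a d1 z)) <= hnorm z.
Proof.
  set (c := coord CH n2 b d2 (coord (Km d2) n1 a d1 z)).
  assert (E : Cmod c = hnorm (c : CH)).
  { unfold Cmod, hnorm. f_equal. destruct c; simpl. ring. }
  rewrite E. unfold hnorm, c. apply sqrt_le_1_alt.
  eapply Rle_trans; [apply coord_norm|]. apply coord_norm.
Qed.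

Lemma Cmod_pos c : c <> C0 -> 0 < Cmod c.
Proof.
  intro Hc. pose proof (Cmod_nonneg c). destruct (Req_dec (Cmod c) 0) as [E|E]; [|lra].
  exfalso. apply Hc. unfold Cmod in E. destruct c as [u v]. simpl in E.
  apply sqrt_eq_0 in E; [|nra]. unfold C0. f_equal; nra.
Qed.

Theorem Nu_main :
    (forall p, is_lub (unorm_set p) (Nu p)) /\
    (forall p, 0 <= Nu p) /\
    (forall p, Nu p = 0 <-> (forall w, coeff p w = C0)) /\
    (forall p q, Nu (padd p q) <= Nu p + Nu q) /\
    (forall a p, Nu (pscale a p) = Cmod a * Nu p) /\
    (forall p q, Nu (pmul p q) <= Nu p * Nu q).
Proof.
  split; [apply Nu_lub|]. split; [apply Nu_nonneg|]. split; [|split; [|split]].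
  - intro p. split.
    + intros E [a b]. apply NNPP. intro Hw.
      set (d1 := length a). set (d2 := length b).
      destruct (peval_opnorm_ex _ _ _ p (model_Pn d1 d2)) as [r Hr].
      assert (U : unorm_set p r) by (exists (Hm d1 d2), (Xm d1 d2), (Ym d1 d2); split; auto; apply model_Pn).
      pose proof (Nu_ge _ _ U).
      pose proof (opnorm_le1 _ _ _ (Om d1 d2) Hr (Req_le _ _ (hnorm_Om d1 d2))).
      pose proof (Cmod_le_coord d1 d2 a b (peval p (Xm d1 d2) (Ym d1 d2) (Om d1 d2))).
      unfold d1, d2 in *. rewrite model_coeff in H1.
      pose proof (Cmod_pos _ Hw). lra.
    + intro Hc. apply Rle_antisym; [|apply Nu_nonneg].
      apply Nu_le. intros r [HH [T1 [T2 [HP Hr]]]].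
      apply (opnorm_least _ _ _ _ Hr); [|lra].
      intro h. rewrite zero_coeff_peval by auto. rewrite hnorm_hzero. lra.
  - intros p q. apply Nu_le. intros r [HH [T1 [T2 [HP Hr]]]].
    destruct (Pn_facts _ _ _ HP) as [L1 [L2 [K1 [K2 Cm]]]].
    destruct (peval_opnorm_ex _ _ _ p HP) as [rp Hp].
    destruct (peval_opnorm_ex _ _ _ q HP) as [rq Hq].
    assert (rp <= Nu p) by (apply Nu_ge; exists HH, T1, T2; auto).
    assert (rq <= Nu q) by (apply Nu_ge; exists HH, T1, T2; auto).
    assert (r <= rp + rq); [|lra].
    apply (opnorm_least _ _ _ _ Hr).
    + intro h. unfold padd. rewrite peval_app.
      eapply Rle_trans; [apply hnorm_triangle|].
      pose proof (opnorm_bound _ _ _ (peval_homog _ _ _ _ _ L1 L2 p) Hp h).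
      pose proof (opnorm_bound _ _ _ (peval_homog _ _ _ _ _ L1 L2 q) Hq h). lra.
    + pose proof (opnorm_nonneg _ _ _ Hp). pose proof (opnorm_nonneg _ _ _ Hq). lra.
  - intros a p. pose proof (Cmod_nonneg a) as Ha. apply Rle_antisym.
    + apply Nu_le. intros r [HH [T1 [T2 [HP Hr]]]].
      destruct (Pn_facts _ _ _ HP) as [L1 [L2 [K1 [K2 Cm]]]].
      destruct (peval_opnorm_ex _ _ _ p HP) as [rp Hp].
      assert (rp <= Nu p) by (apply Nu_ge; exists HH, T1, T2; auto).
      pose proof (opnorm_nonneg _ _ _ Hp).
      assert (Hq : r <= Cmod a * rp).
      { apply (opnorm_least _ _ _ _ Hr).
        - intro h. rewrite peval_scale, hnorm_scal.
          pose proof (opnorm_bound _ _ _ (peval_homog _ _ _ _ _ L1 L2 p) Hp h).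
          rewrite Rmult_assoc. apply Rmult_le_compat_l; auto.
        - apply Rmult_le_pos; auto. }
      eapply Rle_trans; [exact Hq|]. apply Rmult_le_compat_l; auto.
    + destruct (Req_dec (Cmod a) 0) as [Z|Z].
      * rewrite Z, Rmult_0_l. apply Nu_nonneg.
      * assert (Pa : 0 < Cmod a) by lra.
        assert (Q5 : Nu p <= Nu (pscale a p) / Cmod a).
        { apply Nu_le. intros r [HH [T1 [T2 [HP Hr]]]].
          destruct (Pn_facts _ _ _ HP) as [L1 [L2 [K1 [K2 Cm]]]].
          destruct (peval_opnorm_ex _ _ _ (pscale a p) HP) as [r' Hr'].
          assert (Q1 : r' <= Nu (pscale a p)) by (apply Nu_ge; exists HH, T1, T2; auto).
          pose proof (opnorm_nonneg _ _ _ Hr') as Q2.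
          assert (Q3 : r <= r' / Cmod a); [|
             apply Rle_trans with (r' / Cmod a); auto; unfold Rdiv;
             apply Rmult_le_compat_r; [left; apply Rinv_0_lt_compat; auto|auto]].
          apply (opnorm_least _ _ _ _ Hr).
          - intro h. pose proof (opnorm_bound _ _ _ (peval_homog _ _ _ _ _ L1 L2 (pscale a p)) Hr' h) as Q4.
            rewrite peval_scale, hnorm_scal in Q4.
            apply (Rmult_le_reg_l (Cmod a)); auto.
            replace (Cmod a * (r' / Cmod a * hnorm h)) with (r' * hnorm h) by (field; lra). auto.
          - unfold Rdiv. apply Rmult_le_pos; auto. left; apply Rinv_0_lt_compat; auto. }
        apply (Rmult_le_compat_l (Cmod a)) in Q5; auto.
        replace (Cmod a * (Nu (pscale a p) / Cmod a)) with (Nu (pscale a p)) in Q5 by (field; lra).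
        lra.
  - intros p q. apply Nu_le. intros r [HH [T1 [T2 [HP Hr]]]].
    destruct (Pn_facts _ _ _ HP) as [L1 [L2 [K1 [K2 Cm]]]].
    destruct (peval_opnorm_ex _ _ _ p HP) as [rp Hp].
    destruct (peval_opnorm_ex _ _ _ q HP) as [rq Hq].
    assert (rp <= Nu p) by (apply Nu_ge; exists HH, T1, T2; auto).
    assert (rq <= Nu q) by (apply Nu_ge; exists HH, T1, T2; auto).
    pose proof (opnorm_nonneg _ _ _ Hp). pose proof (opnorm_nonneg _ _ _ Hq).
    assert (r <= rp * rq).
    { apply (opnorm_least _ _ _ _ Hr); [|apply Rmult_le_pos; auto].
      intro h. rewrite (peval_mul _ _ _ _ _ L1 L2 Cm).
      pose proof (opnorm_bound _ _ _ (peval_homog _ _ _ _ _ L1 L2 p) Hp (peval q T1 T2 h)).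
      pose proof (opnorm_bound _ _ _ (peval_homog _ _ _ _ _ L1 L2 q) Hq h).
      eapply Rle_trans; [exact H3|]. rewrite Rmult_assoc. apply Rmult_le_compat_l; auto. }
    eapply Rle_trans; [eassumption|]. apply Rmult_le_compat; auto.
Qed.

End Main.


Theorem mainTheorem10 (n1 n2 : nat) (hn1 : (1 <= n1)%nat) (hn2 : (1 <= n2)%nat) :
  exists N : ncpoly n1 n2 -> R,
    (forall p, is_lub (unorm_set p) (N p)) /\
    (forall p, 0 <= N p) /\
    (forall p, N p = 0 <-> (forall w, coeff p w = C0)) /\
    (forall p q, N (padd p q) <= N p + N q) /\
    (forall a p, N (pscale a p) = Cmod a * N p) /\
    (forall p q, N (pmul p q) <= N p * N q).
Proof.
  exists (Nu n1 n2). exact (Nu_main n1 n2).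
Qed.
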